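(* Let $f_1,f_2,f_3$ be smooth nowhere-vanishing functions on $\mathbb R^3$ and $g=\frac{1}{f_1^2}dx^1\otimes dx^1+\frac{1}{f_2^2}dx^2\otimes dx^2+\frac{1}{f_3^2}dx^3\otimes dx^3$, with $E_i=f_i\frac{\partial}{\partial x^i}$. (i) $E_2$ is a Killing vector field of $(\mathbb R^3,g)$ if and only if $f_2$ depends only on $x^2$ and $f_1,f_3$ depend only on $(x^1,x^3)$. (ii) $E_3$ is a Killing vector field of $(\mathbb R^3,g)$ if and only if $f_3$ depends only on $x^3$ and $f_1,f_2$ depend only on $(x^1,x^2)$.
   Context: $x^1,x^2,x^3$ are the standard coordinates on $\mathbb R^3$. A vector field $V$ is Killing if $\mathcal L_Vg=0$. *)

(* Defs.v *)
From Stdlib Require Import Reals List.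
From Coquelicot Require Import Coquelicot.
Open Scope R_scope.

Inductive idx := I1 | I2 | I3.

Definition idx_eqb (i j : idx) : bool :=
  match i, j with
  | I1, I1 | I2, I2 | I3, I3 => true
  | _, _ => false
  end.

Definition pt := idx -> R.

Definition upd (x : pt) (i : idx) (t : R) : pt :=
  fun j => if idx_eqb j i then t else x j.

Definition partial (i : idx) (f : pt -> R) : pt -> R :=
  fun x => Derive (fun t => f (upd x i t)) (x i).

Fixpoint iter_partial (l : list idx) (f : pt -> R) : pt -> R :=
  match l with
  | nil => f
  | i :: l' => partial i (iter_partial l' f)
  end.

Definition cont_at (F : pt -> R) (x : pt) : Prop :=
  forall eps : R, 0 < eps -> exists delta : R, 0 < delta /\
    forall y : pt, (forall i, Rabs (y i - x i) < delta) -> Rabs (F y - F x) < eps.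

Definition smooth (f : pt -> R) : Prop :=
  forall (l : list idx) (x : pt),
    (forall i, ex_derive (fun t => iter_partial l f (upd x i t)) (x i)) /\
    cont_at (iter_partial l f) x.

Definition sum3 (h : idx -> R) : R := h I1 + h I2 + h I3.

Definition tensor02 := idx -> idx -> pt -> R.
Definition vfield := idx -> pt -> R.

(* Lie derivative (L_V g)_{ij}
   = (L_V g)(d_i, d_j) = V(g(d_i,d_j)) - g([V,d_i],d_j) - g(d_i,[V,d_j]),
   with [V,d_i] = - (d_i V^k) d_k, i.e.
   V^k d_k g_ij + g_kj d_i V^k + g_ik d_j V^k. *)
Definition lie_deriv (V : vfield) (g : tensor02) (i j : idx) (x : pt) : R :=
  sum3 (fun k => V k x * partial k (g i j) x
               + g k j x * partial i (V k) x
               + g i k x * partial j (V k) x).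

Definition Killing (V : vfield) (g : tensor02) : Prop :=
  forall i j x, lie_deriv V g i j x = 0.

Definition diag_metric (f : idx -> pt -> R) : tensor02 :=
  fun i j x => if idx_eqb i j then 1 / (f i x) ^ 2 else 0.

Definition frame_field (f : idx -> pt -> R) (i : idx) : vfield :=
  fun k x => if idx_eqb k i then f i x else 0.

Definition depends_only_on1 (h : pt -> R) (a : idx) : Prop :=
  exists u : R -> R, forall x, h x = u (x a).

Definition depends_only_on2 (h : pt -> R) (a b : idx) : Prop :=
  exists u : R -> R -> R, forall x, h x = u (x a) (x b).

(* Main.v *)
Require Import Defs.
From Stdlib Require Import Reals Lra FunctionalExtensionality.
From Coquelicot Require Import Coquelicot.
Open Scope R_scope.

Lemma upd_upd x i s t : upd (upd x i s) i t = upd x i t.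
Proof. apply functional_extensionality; intro j; unfold upd; destruct j, i; reflexivity. Qed.
Lemma upd_same x i : upd x i (x i) = x.
Proof. apply functional_extensionality; intro j; unfold upd; destruct j, i; reflexivity. Qed.
Lemma upd_at x i t : upd x i t i = t.
Proof. unfold upd; destruct i; reflexivity. Qed.

Lemma partial_const i c x : partial i (fun _ => c) x = 0.
Proof. unfold partial; apply Derive_const. Qed.

Lemma partial_invar (h : pt -> R) i x :
  (forall y t, h (upd y i t) = h y) -> partial i h x = 0.
Proof.
  intro H; unfold partial.
  rewrite (Derive_ext _ (fun _ => h x)); [apply Derive_const|].
  intro t; apply H.
Qed.

Lemma invar_of_partial (h : pt -> R) i :
  (forall y, ex_derive (fun t => h (upd y i t)) (y i)) ->
  (forall y, partial i h y = 0) -> forall y t, h (upd y i t) = h y.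
Proof.
  intros Hd Hp y t.
  set (phi := fun s => h (upd y i s)).
  assert (D : forall s, is_derive phi s zero).
  { intro s. specialize (Hd (upd y i s)). specialize (Hp (upd y i s)).
    unfold partial in Hp. rewrite upd_at in Hd, Hp.
    assert (E : forall t, h (upd (upd y i s) i t) = phi t)
      by (intro; unfold phi; rewrite upd_upd; reflexivity).
    rewrite (Derive_ext _ _ _ E) in Hp.
    apply (ex_derive_ext _ _ _ E) in Hd.
    apply Derive_correct in Hd. rewrite Hp in Hd. exact Hd. }
  change (phi t = h y).
  replace (h y) with (phi (y i)) by (unfold phi; rewrite upd_same; reflexivity).
  destruct (Rtotal_order t (y i)) as [Hl|[He|Hl]].
  - apply eq_is_derive; auto.
  - subst; reflexivity.
  - symmetry; apply eq_is_derive; auto.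
Qed.

Lemma partial_inv2 (h : pt -> R) i x :
  ex_derive (fun t => h (upd x i t)) (x i) -> h x <> 0 ->
  partial i (fun y => 1 / (h y)^2) x = -2 * partial i h x / (h x)^3.
Proof.
  intros Hd Hn. unfold partial.
  apply is_derive_unique.
  apply Derive_correct in Hd.
  assert (Hn' : h (upd x i (x i)) <> 0) by (rewrite upd_same; auto).
  apply is_derive_pow with (n := 2%nat) in Hd.
  apply is_derive_inv in Hd; [|simpl; rewrite upd_same; intro; apply Hn; nra].
  rewrite upd_same in Hd.
  replace (-2 * Derive (fun t : R => h (upd x i t)) (x i) / h x ^ 3) with
    (- (INR 2 * Derive (fun t : R_AbsRing => h (upd x i t)) (x i) *
         h x ^ Init.Nat.pred 2) / (h x ^ 2) ^ 2).
  - eapply is_derive_ext; [|apply Hd].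
    intro t; simpl; unfold Rdiv; rewrite Rmult_1_l; reflexivity.
  - simpl pred; simpl INR.
    assert (K : forall D, - ((1 + 1) * D * h x ^ 1) / (h x ^ 2) ^ 2 = -2 * D / h x ^ 3) by (intro; field; auto).
    apply K.
Qed.

Ltac expand_in H := cbv beta iota delta [lie_deriv sum3 frame_field diag_metric idx_eqb] in H.

Lemma lin0 a p : a <> 0 -> a * p = 0 -> p = 0.
Proof. intros Ha H. destruct (Rmult_integral _ _ H); [contradiction|auto]. Qed.

Ltac nz := repeat first
  [ apply Rmult_integral_contrapositive_currified
  | apply Rinv_neq_0_compat | apply pow_nonzero | lra | auto ].

Lemma kill2 (f : idx -> pt -> R)
  (Hd : forall i y k, ex_derive (fun t => f i (upd y k t)) (y k))
  (Hnz : forall i x, f i x <> 0) :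
  Killing (frame_field f I2) (diag_metric f) <->
  (forall x, partial I2 (f I1) x = 0) /\ (forall x, partial I2 (f I3) x = 0) /\
  (forall x, partial I1 (f I2) x = 0) /\ (forall x, partial I3 (f I2) x = 0).
Proof.
  split.
  - intro H. repeat split; intro x.
    + pose proof (H I1 I1 x) as H0. expand_in H0. rewrite !partial_const in H0.
      rewrite (partial_inv2 (f I1) I2 x) in H0 by auto.
      apply (lin0 (-2 * f I2 x / f I1 x ^3)); [unfold Rdiv; nz|].
      rewrite <- H0; field; auto.
    + pose proof (H I3 I3 x) as H0. expand_in H0. rewrite !partial_const in H0.
      rewrite (partial_inv2 (f I3) I2 x) in H0 by auto.
      apply (lin0 (-2 * f I2 x / f I3 x ^3)); [unfold Rdiv; nz|].
      rewrite <- H0; field; auto.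
    + pose proof (H I1 I2 x) as H0. expand_in H0. rewrite !partial_const in H0.
      change (fun y : pt => f I2 y) with (f I2) in H0.
      apply (lin0 (1 / f I2 x ^2)); [unfold Rdiv; nz|].
      rewrite <- H0; field; auto.
    + pose proof (H I3 I2 x) as H0. expand_in H0. rewrite !partial_const in H0.
      change (fun y : pt => f I2 y) with (f I2) in H0.
      apply (lin0 (1 / f I2 x ^2)); [unfold Rdiv; nz|].
      rewrite <- H0; field; auto.
  - intros [A [B [C D]]] i j x.
    destruct i, j; cbv beta iota delta [lie_deriv sum3 frame_field diag_metric idx_eqb];
      rewrite ?partial_const; change (fun y : pt => f I2 y) with (f I2);
      rewrite ?C, ?D;
      rewrite ?(partial_inv2 (f I1) I2 x), ?(partial_inv2 (f I3) I2 x),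
        ?(partial_inv2 (f I2) I2 x) by auto;
      rewrite ?A, ?B; field; auto.
Qed.

Lemma kill3 (f : idx -> pt -> R)
  (Hd : forall i y k, ex_derive (fun t => f i (upd y k t)) (y k))
  (Hnz : forall i x, f i x <> 0) :
  Killing (frame_field f I3) (diag_metric f) <->
  (forall x, partial I3 (f I1) x = 0) /\ (forall x, partial I3 (f I2) x = 0) /\
  (forall x, partial I1 (f I3) x = 0) /\ (forall x, partial I2 (f I3) x = 0).
Proof.
  split.
  - intro H. repeat split; intro x.
    + pose proof (H I1 I1 x) as H0. expand_in H0. rewrite !partial_const in H0.
      rewrite (partial_inv2 (f I1) I3 x) in H0 by auto.
      apply (lin0 (-2 * f I3 x / f I1 x ^3)); [unfold Rdiv; nz|].
      rewrite <- H0; field; auto.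
    + pose proof (H I2 I2 x) as H0. expand_in H0. rewrite !partial_const in H0.
      rewrite (partial_inv2 (f I2) I3 x) in H0 by auto.
      apply (lin0 (-2 * f I3 x / f I2 x ^3)); [unfold Rdiv; nz|].
      rewrite <- H0; field; auto.
    + pose proof (H I1 I3 x) as H0. expand_in H0. rewrite !partial_const in H0.
      change (fun y : pt => f I3 y) with (f I3) in H0.
      apply (lin0 (1 / f I3 x ^2)); [unfold Rdiv; nz|].
      rewrite <- H0; field; auto.
    + pose proof (H I2 I3 x) as H0. expand_in H0. rewrite !partial_const in H0.
      change (fun y : pt => f I3 y) with (f I3) in H0.
      apply (lin0 (1 / f I3 x ^2)); [unfold Rdiv; nz|].
      rewrite <- H0; field; auto.
  - intros [A [B [C D]]] i j x.
    destruct i, j; cbv beta iota delta [lie_deriv sum3 frame_field diag_metric idx_eqb];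
      rewrite ?partial_const; change (fun y : pt => f I3 y) with (f I3);
      rewrite ?C, ?D;
      rewrite ?(partial_inv2 (f I1) I3 x), ?(partial_inv2 (f I2) I3 x),
        ?(partial_inv2 (f I3) I3 x) by auto;
      rewrite ?A, ?B; field; auto.
Qed.

Definition mk (a b c : R) : pt := fun j => match j with I1 => a | I2 => b | I3 => c end.

Lemma dep2_invar h a b i : depends_only_on2 h a b -> idx_eqb a i = false ->
  idx_eqb b i = false -> forall y t, h (upd y i t) = h y.
Proof. intros [u Hu] Ha Hb y t. rewrite !Hu. unfold upd. rewrite Ha, Hb. reflexivity. Qed.

Lemma dep1_invar h a i : depends_only_on1 h a -> idx_eqb a i = false ->
  forall y t, h (upd y i t) = h y.
Proof. intros [u Hu] Ha y t. rewrite !Hu. unfold upd. rewrite Ha. reflexivity. Qed.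

Theorem mainTheorem5 (f : idx -> pt -> R)
  (Hsmooth : forall i, smooth (f i))
  (Hnz : forall i x, f i x <> 0) :
  (Killing (frame_field f I2) (diag_metric f) <->
     depends_only_on1 (f I2) I2 /\ depends_only_on2 (f I1) I1 I3 /\
     depends_only_on2 (f I3) I1 I3) /\
  (Killing (frame_field f I3) (diag_metric f) <->
     depends_only_on1 (f I3) I3 /\ depends_only_on2 (f I1) I1 I2 /\
     depends_only_on2 (f I2) I1 I2).
Proof.
  assert (Hd : forall i y k, ex_derive (fun t => f i (upd y k t)) (y k))
    by (intros i y k; exact (proj1 (Hsmooth i nil y) k)).
  split.
  - rewrite (kill2 f Hd Hnz). split.
    + intros [A [B [C D]]].
      pose proof (invar_of_partial _ I2 (fun y => Hd I1 y I2) A) as A'; clear A; rename A' into A.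
      pose proof (invar_of_partial _ I2 (fun y => Hd I3 y I2) B) as B'; clear B; rename B' into B.
      pose proof (invar_of_partial _ I1 (fun y => Hd I2 y I1) C) as C'; clear C; rename C' into C.
      pose proof (invar_of_partial _ I3 (fun y => Hd I2 y I3) D) as D'; clear D; rename D' into D.
      split; [|split].
      * exists (fun s => f I2 (mk 0 s 0)); intro x.
        rewrite <- (C x 0), <- (D (upd x I1 0) 0). f_equal.
        apply functional_extensionality; intro j; destruct j; reflexivity.
      * exists (fun a b => f I1 (mk a 0 b)); intro x.
        rewrite <- (A x 0). f_equal.
        apply functional_extensionality; intro j; destruct j; reflexivity.
      * exists (fun a b => f I3 (mk a 0 b)); intro x.
        rewrite <- (B x 0). f_equal.
        apply functional_extensionality; intro j; destruct j; reflexivity.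
    + intros [A [B C]]. repeat split; intro x; apply partial_invar.
      * apply (dep2_invar _ _ _ _ B); reflexivity.
      * apply (dep2_invar _ _ _ _ C); reflexivity.
      * apply (dep1_invar _ _ _ A); reflexivity.
      * apply (dep1_invar _ _ _ A); reflexivity.
  - rewrite (kill3 f Hd Hnz). split.
    + intros [A [B [C D]]].
      pose proof (invar_of_partial _ I3 (fun y => Hd I1 y I3) A) as A'; clear A; rename A' into A.
      pose proof (invar_of_partial _ I3 (fun y => Hd I2 y I3) B) as B'; clear B; rename B' into B.
      pose proof (invar_of_partial _ I1 (fun y => Hd I3 y I1) C) as C'; clear C; rename C' into C.
      pose proof (invar_of_partial _ I2 (fun y => Hd I3 y I2) D) as D'; clear D; rename D' into D.
      split; [|split].
      * exists (fun s => f I3 (mk 0 0 s)); intro x.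
        rewrite <- (C x 0), <- (D (upd x I1 0) 0). f_equal.
        apply functional_extensionality; intro j; destruct j; reflexivity.
      * exists (fun a b => f I1 (mk a b 0)); intro x.
        rewrite <- (A x 0). f_equal.
        apply functional_extensionality; intro j; destruct j; reflexivity.
      * exists (fun a b => f I2 (mk a b 0)); intro x.
        rewrite <- (B x 0). f_equal.
        apply functional_extensionality; intro j; destruct j; reflexivity.
    + intros [A [B C]]. repeat split; intro x; apply partial_invar.
      * apply (dep2_invar _ _ _ _ B); reflexivity.
      * apply (dep2_invar _ _ _ _ C); reflexivity.
      * apply (dep1_invar _ _ _ A); reflexivity.
      * apply (dep1_invar _ _ _ A); reflexivity.
Qed.
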